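(* If $\nu>-1$, then the function $x\mapsto -\mathcal{J}_\nu'(x)$ is strictly log-concave on $(0,j_{\nu+1,1})$.
   Context: For $\nu>-1$ define $\mathcal{J}_\nu:\mathbb{R}\to(-\infty,1]$ by $\mathcal{J}_\nu(x)=\sum_{n\ge0}\frac{(-1/4)^n}{(\nu+1)_n\, n!}x^{2n}$, equivalently $\mathcal{J}_\nu(x)=2^\nu\Gamma(\nu+1)x^{-\nu}J_\nu(x)$ for $x>0$, where $J_\nu$ is the Bessel function of the first kind and $(a)_n$ is the Pochhammer symbol. $j_{\mu,1}$ denotes the first positive zero of $J_\mu$. Note that $-\mathcal{J}_\nu'(x)>0$ on $(0,j_{\nu+1,1})$. *)

(* Defs.v *)
From Stdlib Require Import Reals Lra ClassicalEpsilon Arith Factorial.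
Open Scope R_scope.

Fixpoint poch (a : R) (n : nat) : R :=
  match n with
  | O => 1
  | S k => poch a k * (a + INR k)
  end.

Definition Jcal_term (nu x : R) (n : nat) : R :=
  (-1/4) ^ n / (poch (nu + 1) n * INR (fact n)) * x ^ (2 * n).

(* Normalized Bessel function: the sum of the (everywhere convergent, for
   nu > -1) series  sum_{n>=0} (-1/4)^n / ((nu+1)_n n!) x^(2n).
   Chosen by Hilbert's epsilon among the limits of the partial sums
   (the limit is unique when it exists). *)
Definition Jcal (nu x : R) : R :=
  epsilon (inhabits 0) (fun l => infinite_sum (Jcal_term nu x) l).

(* j is the first positive zero of J_mu.  For x > 0,
   J_mu(x) = (x/2)^mu / Gamma(mu+1) * Jcal mu x with a positive factor,
   so the positive zeros of J_mu are exactly those of Jcal mu. *)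
Definition first_pos_zero (mu j : R) : Prop :=
  0 < j /\ Jcal mu j = 0 /\ (forall x, 0 < x < j -> Jcal mu x <> 0).

Definition strictly_log_concave_on (g : R -> R) (a b : R) : Prop :=
  (forall x, a < x < b -> 0 < g x) /\
  (forall x y t, a < x < b -> a < y < b -> x <> y -> 0 < t < 1 ->
     t * ln (g x) + (1 - t) * ln (g y) < ln (g (t * x + (1 - t) * y))).

(* Main.v *)
Require Import Defs.
From Stdlib Require Import Reals Lra Psatz Arith Factorial ClassicalEpsilon FunctionalExtensionality.
From Coquelicot Require Import Coquelicot.
Open Scope R_scope.

Definition cf (a : R) (n : nat) : R := (-1/4) ^ n / (poch (a + 1) n * INR (fact n)).
Definition Fa (a y : R) : R := PSeries (cf a) y.

Ltac side := repeat split; try lra; try (apply pow_nonzero; lra).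

Lemma poch_pos b n : 0 < b -> 0 < poch b n.
Proof.
  intros Hb; induction n as [|n IH]; simpl; [lra|].
  apply Rmult_lt_0_compat; auto. pose proof (pos_INR n); lra.
Qed.

Lemma poch_S b n : poch b (S n) = b * poch (b + 1) n.
Proof.
  induction n as [|n IH]; [simpl; ring|].
  change (poch b (S (S n))) with (poch b (S n) * (b + INR (S n))).
  rewrite IH. simpl poch. rewrite S_INR. ring.
Qed.

Lemma fact_pos n : 0 < INR (fact n).
Proof. apply lt_0_INR. apply lt_O_fact. Qed.

Lemma cf_nz a n : -1 < a -> cf a n <> 0.
Proof.
  intros Ha. unfold cf. apply Rmult_integral_contrapositive_currified.
  apply pow_nonzero; lra.
  apply Rinv_neq_0_compat. apply Rgt_not_eq, Rmult_lt_0_compat.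
  apply poch_pos; lra. apply fact_pos.
Qed.

Lemma cf_ratio a n : -1 < a ->
  cf a (S n) / cf a n = (-1/4) / ((a + 1 + INR n) * INR (S n)).
Proof.
  intros Ha. unfold cf. simpl poch. rewrite fact_simpl, mult_INR.
  pose proof (poch_pos (a+1) n ltac:(lra)). pose proof (fact_pos n).
  pose proof (pos_INR n). rewrite S_INR.
  simpl pow. field. side.
Qed.

Lemma cf_radius a : -1 < a -> CV_radius (cf a) = p_infty.
Proof.
  intros Ha. apply CV_radius_infinite_DAlembert.
  - intros n; apply cf_nz; auto.
  - apply is_lim_seq_le_le with (u := fun _ => 0)
      (w := fun n => (/ (4 * (a+1))) * / INR (S n)).
    + intros n. rewrite cf_ratio by auto.
      pose proof (pos_INR n). rewrite S_INR.
      rewrite Rabs_div by (apply Rgt_not_eq; nra).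
      rewrite Rabs_left by lra. rewrite Rabs_pos_eq by nra.
      split. apply Rlt_le, Rdiv_lt_0_compat; nra.
      replace (- (-1/4) / ((a + 1 + INR n) * (INR n + 1))) with
        (/ (4 * (a + 1 + INR n) * (INR n + 1))) by (field; lra).
      rewrite <- Rinv_mult. apply Rinv_le_contravar. nra. nra.
    + apply is_lim_seq_const.
    + replace (Finite 0) with (Rbar_mult (/ (4 * (a+1))) 0) by (simpl; f_equal; ring).
      apply is_lim_seq_scal_l.
      replace (Finite 0) with (Rbar_inv p_infty) by reflexivity.
      apply is_lim_seq_inv. apply (is_lim_seq_incr_1 INR). apply is_lim_seq_INR.
      discriminate.
Qed.

Lemma cf_in a y : -1 < a -> Rbar_lt (Rabs y) (CV_radius (cf a)).
Proof. intros Ha; rewrite cf_radius; simpl; auto. Qed.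

Lemma Fa_0 a : Fa a 0 = 1.
Proof. unfold Fa. rewrite PSeries_0. unfold cf. simpl. field. Qed.

Lemma PS_derive_cf a n : -1 < a ->
  PS_derive (cf a) n = - cf (a+1) n / (4 * (a+1)).
Proof.
  intros Ha. unfold PS_derive, cf. rewrite poch_S, fact_simpl, mult_INR.
  pose proof (poch_pos (a+1+1) n ltac:(lra)). pose proof (fact_pos n).
  rewrite S_INR. pose proof (pos_INR n).
  simpl pow. field. side.
Qed.

Lemma Fa_derive a y : -1 < a ->
  derivable_pt_lim (Fa a) y (- Fa (a+1) y / (4 * (a+1))).
Proof.
  intros Ha. apply is_derive_Reals. unfold Fa.
  replace (- PSeries (cf (a+1)) y / (4 * (a+1))) with (PSeries (PS_derive (cf a)) y).
  apply is_derive_PSeries, cf_in; auto.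
  rewrite (PSeries_ext _ (PS_scal (- / (4 * (a+1))) (cf (a+1)))).
  rewrite PSeries_scal. field. lra.
  intros n. rewrite PS_derive_cf by auto. unfold PS_scal. simpl. unfold scal; simpl; unfold mult; simpl; field; lra.
Qed.

Lemma Fa_rec a y : -1 < a ->
  y * Fa (a+2) y = 4 * (a+1) * (a+2) * (Fa (a+1) y - Fa a y).
Proof.
  intros Ha. unfold Fa. rewrite <- PSeries_incr_1.
  rewrite <- PSeries_minus by (apply CV_radius_inside, cf_in; lra).
  rewrite <- PSeries_scal. apply PSeries_ext. intros [|n];
  unfold PS_incr_1, PS_scal, PS_minus, cf; unfold scal, plus, opp, mult; simpl;
  unfold mult, plus, opp; simpl.
  - unfold zero; simpl. field.
  - assert (E1 : poch (a+1+1) n * (a+1+1+INR n) = (a+2) * poch (a+2+1) n).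
    { change (poch (a+1+1) n * (a+1+1+INR n)) with (poch (a+1+1) (S n)).
      rewrite poch_S. replace (a+1+1) with (a+2) by ring. reflexivity. }
    assert (E2 : poch (a+1) n * (a+1+INR n) = (a+1) * ((a+2) * poch (a+2+1) n / (a+2+INR n))).
    { change (poch (a+1) n * (a+1+INR n)) with (poch (a+1) (S n)).
      rewrite poch_S, <- E1. replace (a+1+1) with (a+2) by ring. field.
      pose proof (pos_INR n); lra. }
    assert (E3 : INR (fact n + n * fact n) = (INR n + 1) * INR (fact n)).
    { rewrite plus_INR, mult_INR. ring. }
    rewrite E1, E2, E3.
    pose proof (poch_pos (a+2+1) n ltac:(lra)). pose proof (fact_pos n).
    pose proof (pos_INR n).
    field. split. lra. side.
Qed.
Section Core.
Variables (a j : R) (F G : R -> R).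
Hypothesis Ha : 0 < a.
Hypothesis Hj : 0 < j.
Hypothesis HFd : forall y, is_derive F y (- G y / (4*(a+1))).
Hypothesis HGe : forall y, ex_derive G y.
Hypothesis HGd : forall y, y <> 0 -> is_derive G y ((a+1) * (F y - G y) / y).
Hypothesis HF0 : F 0 = 1.
Hypothesis HG0 : G 0 = 1.
Hypothesis HFnz : forall x, 0 < x < j -> F (x^2) <> 0.

Lemma HFe y : ex_derive F y.
Proof. eexists; apply HFd. Qed.

Lemma DF y : Derive (fun x => F x) y = - G y / (4*(a+1)).
Proof. apply is_derive_unique, HFd. Qed.
Lemma DG y : y <> 0 -> Derive (fun x => G x) y = (a+1) * (F y - G y) / y.
Proof. intros; apply is_derive_unique, HGd; auto. Qed.

Lemma Fcont : continuity F.
Proof.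
  intros y. apply continuity_pt_filterlim. apply (ex_derive_continuous (K:=R_AbsRing) (V:=R_NormedModule)), HFe.
Qed.

Lemma Fpos y : 0 <= y < j^2 -> 0 < F y.
Proof.
  intros [Hy0 Hyj].
  destruct (Rle_or_lt (F y) 0) as [Hle|]; auto.
  destruct (IVT_cor F 0 y Fcont Hy0) as [z [[Hz0 Hzy] Hz]].
  { rewrite HF0. lra. }
  exfalso.
  destruct (Req_dec z 0) as [->|Hz0'].
  { rewrite HF0 in Hz; lra. }
  apply (HFnz (sqrt z)).
  - split. apply sqrt_lt_R0; lra.
    rewrite <- (sqrt_pow2 j) by lra. apply sqrt_lt_1; nra.
  - rewrite pow2_sqrt by lra. auto.
Qed.


Definition Kf y := y * G y ^2 / (4*(a+1)^2) - (2*a+1) * F y * G y / (2*(a+1)) + F y ^2.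

Lemma Knear : exists d, 0 < d /\ forall y, 0 < y < d -> 0 < Kf y.
Proof.
  assert (He : ex_derive Kf 0).
  { unfold Kf. auto_derive. repeat split; auto using HFe. }
  assert (Hc : continuity_pt Kf 0).
  { apply continuity_pt_filterlim.
    apply (ex_derive_continuous (K:=R_AbsRing) (V:=R_NormedModule)), He. }
  assert (HK0 : Kf 0 = 1 / (2 * (a+1))).
  { unfold Kf. rewrite HF0, HG0. field. lra. }
  unfold continuity_pt, continue_in, limit1_in, limit_in in Hc.
  destruct (Hc (Kf 0 / 2)) as [d [Hd Hd']].
  { rewrite HK0. apply Rdiv_lt_0_compat; [|lra]. apply Rdiv_lt_0_compat; lra. }
  exists d. split; auto. intros y Hy.
  specialize (Hd' y). simpl in Hd'. unfold R_dist in Hd'.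
  assert (Rabs (Kf y - Kf 0) < Kf 0 / 2).
  { apply Hd'. split. split. constructor. lra. rewrite Rminus_0_r, Rabs_pos_eq; lra. }
  assert (0 < Kf 0). { rewrite HK0. apply Rdiv_lt_0_compat; lra. }
  apply Rabs_def2 in H. lra.
Qed.

Definition Hf y := exp ((a+1) * ln y) * Kf y.

Lemma Hf_der y : 0 < y ->
  derivable_pt_lim Hf y (exp ((a+1) * ln y) / y * ((y * G y ^2 / (4*(a+1)^2) + F y ^2) / 2)).
Proof.
  intros Hy. apply is_derive_Reals. unfold Hf, Kf.
  auto_derive.
  - repeat split; auto using HFe.
  - rewrite DF, DG by lra. field. lra.
Qed.


Lemma Kpos y : 0 < y < j^2 -> 0 < Kf y.
Proof.
  intros Hy. destruct Knear as [d [Hd Hd']].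
  set (z := Rmin (d/2) (y/2)).
  assert (Hz : 0 < z /\ z < y /\ z < d).
  { unfold z, Rmin; destruct (Rle_dec (d/2) (y/2)); lra. }
  assert (HKz : 0 < Kf z) by (apply Hd'; lra).
  destruct (MVT_cor2 Hf (fun y => exp ((a+1) * ln y) / y * ((y * G y ^2 / (4*(a+1)^2) + F y ^2) / 2)) z y)
    as [c [Hc1 Hc2]]; [lra| |].
  { intros c Hc. apply Hf_der. lra. }
  assert (HFc : 0 < F c) by (apply Fpos; lra).
  assert (0 < exp ((a+1) * ln c) / c * ((c * G c ^2 / (4*(a+1)^2) + F c ^2) / 2)).
  { apply Rmult_lt_0_compat. apply Rdiv_lt_0_compat. apply exp_pos. lra.
    apply Rdiv_lt_0_compat; [|lra]. apply Rplus_le_lt_0_compat.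
    apply Rmult_le_pos. apply Rmult_le_pos. lra. nra. apply Rlt_le, Rinv_0_lt_compat. nra.
    nra. }
  assert (0 < Hf z) by (unfold Hf; apply Rmult_lt_0_compat; auto; apply exp_pos).
  assert (0 < Hf y) by nra.
  unfold Hf in H1. pose proof (exp_pos ((a+1) * ln y)).
  nra.
Qed.

Definition kf x := x * G (x^2) / (2*(a+1)*F(x^2)).

Lemma kf_der x : 0 < x < j -> derivable_pt_lim kf x (Kf (x^2) / F (x^2) ^2).
Proof.
  intros Hx. assert (HF : 0 < F (x^2)) by (apply Fpos; split; nra).
  apply is_derive_Reals. unfold kf.
  auto_derive.
  - repeat split; auto using HFe. replace (x*(x*1)) with (x^2) by ring. nra.
  - replace (x*(x*1)) with (x^2) by ring. rewrite DF, DG by nra. unfold Kf. field. split; nra.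
Qed.

Lemma kf_mono x1 x2 : 0 < x1 -> x1 < x2 -> x2 < j -> kf x1 <= kf x2.
Proof.
  intros H1 H2 H3.
  destruct (MVT_cor2 kf (fun x => Kf (x^2) / F (x^2) ^2) x1 x2) as [c [Hc1 Hc2]]; [lra| |].
  { intros c Hc. apply kf_der. lra. }
  assert (0 < Kf (c^2)) by (apply Kpos; split; nra).
  assert (0 < F (c^2)) by (apply Fpos; split; nra).
  assert (0 < Kf (c^2) / F (c^2) ^2) by (apply Rdiv_lt_0_compat; nra).
  nra.
Qed.

Definition hf x := ln (x * F (x^2) / (2*a)).

Lemma hf_der x : 0 < x < j -> derivable_pt_lim hf x (1/x - kf x).
Proof.
  intros Hx. assert (HF : 0 < F (x^2)) by (apply Fpos; split; nra).
  apply is_derive_Reals. unfold hf.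
  auto_derive.
  - repeat split; auto using HFe. replace (x*(x*1)) with (x^2) by ring. apply Rdiv_lt_0_compat; nra.
  - replace (x*(x*1)) with (x^2) by ring. rewrite DF. unfold kf. field. repeat split; nra.
Qed.


Lemma hfd_dec c1 c2 : 0 < c1 -> c1 < c2 -> c2 < j -> 1/c2 - kf c2 < 1/c1 - kf c1.
Proof.
  intros. pose proof (kf_mono c1 c2 H H0 H1).
  assert (1/c2 < 1/c1). { apply Rinv_lt_contravar in H0; [|nra]. lra. }
  lra.
Qed.

Lemma hf_conc_lt x y t : 0 < x -> x < y -> y < j -> 0 < t < 1 ->
  t * hf x + (1 - t) * hf y < hf (t * x + (1 - t) * y).
Proof.
  intros Hx Hxy Hy Ht. set (z := t * x + (1 - t) * y).
  assert (Hz : x < z < y) by (unfold z; nra).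
  destruct (MVT_cor2 hf (fun x => 1/x - kf x) x z) as [c1 [E1 Hc1]]; [lra| |].
  { intros c Hc. apply hf_der. lra. }
  destruct (MVT_cor2 hf (fun x => 1/x - kf x) z y) as [c2 [E2 Hc2]]; [lra| |].
  { intros c Hc. apply hf_der. lra. }
  pose proof (hfd_dec c1 c2 ltac:(lra) ltac:(lra) ltac:(lra)).
  set (d1 := 1/c1 - kf c1) in *. set (d2 := 1/c2 - kf c2) in *.
  assert (Hzx : z - x = (1-t)*(y-x)) by (unfold z; ring).
  assert (Hyz : y - z = t*(y-x)) by (unfold z; ring).
  assert (E : t * hf x + (1 - t) * hf y - hf z = t*(1-t)*(y-x)*(d2-d1)).
  { replace (t * hf x + (1 - t) * hf y - hf z) with
      (- t * (hf z - hf x) + (1-t) * (hf y - hf z)) by ring.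
    rewrite E1, E2, Hzx, Hyz. ring. }
  assert (0 < t*(1-t)*(y-x)) by (apply Rmult_lt_0_compat; nra).
  nra.
Qed.

Lemma hf_conc x y t : 0 < x < j -> 0 < y < j -> x <> y -> 0 < t < 1 ->
  t * hf x + (1 - t) * hf y < hf (t * x + (1 - t) * y).
Proof.
  intros Hx Hy Hxy Ht. destruct (Rlt_or_le x y).
  - apply hf_conc_lt; lra.
  - pose proof (hf_conc_lt y x (1-t) ltac:(lra) ltac:(lra) ltac:(lra) ltac:(lra)).
    replace (t * x + (1 - t) * y) with ((1 - t) * y + (1 - (1 - t)) * x) by ring.
    lra.
Qed.

End Core.

Lemma Jcal_eq nu x : -1 < nu -> Jcal nu x = Fa nu (x^2).
Proof.
  intros Hnu.
  assert (Hs : infinite_sum (Jcal_term nu x) (Fa nu (x^2))).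
  { apply is_series_Reals. unfold Fa.
    pose proof (PSeries_correct (cf nu) (x^2) (CV_radius_inside _ _ (cf_in nu (x^2) Hnu))) as H.
    unfold is_pseries in H. eapply is_series_ext; [|exact H].
    intros n. simpl. rewrite pow_n_pow. unfold scal; simpl; unfold mult; simpl.
    unfold Jcal_term, cf. rewrite pow_mult. replace (x*(x*1)) with (x^2) by ring. ring. }
  unfold Jcal. apply (uniqueness_sum (Jcal_term nu x)); [|exact Hs].
  apply (epsilon_spec (inhabits 0) (fun l => infinite_sum (Jcal_term nu x) l)).
  exists (Fa nu (x^2)); exact Hs.
Qed.

Theorem theorem2 (nu j : R) (dJ : R -> R) :
  -1 < nu ->
  (forall x, derivable_pt_lim (Jcal nu) x (dJ x)) ->
  first_pos_zero (nu + 1) j ->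
  strictly_log_concave_on (fun x => - dJ x) 0 j.
Proof.
  intros Hnu HdJ [Hj [_ Hnz]].
  set (a := nu + 1).
  assert (Ha : 0 < a) by (unfold a; lra).
  assert (HFd : forall y, is_derive (Fa a) y (- Fa (a+1) y / (4*(a+1)))).
  { intros y; apply is_derive_Reals, Fa_derive; lra. }
  assert (HGe : forall y, ex_derive (Fa (a+1)) y).
  { intros y. eexists. apply is_derive_Reals, Fa_derive. lra. }
  assert (HGd : forall y, y <> 0 -> is_derive (Fa (a+1)) y ((a+1) * (Fa a y - Fa (a+1) y) / y)).
  { intros y Hy. apply is_derive_Reals.
    replace ((a+1) * (Fa a y - Fa (a+1) y) / y) with (- Fa (a+1+1) y / (4 * (a+1+1))).
    apply Fa_derive; lra.
    replace (a+1+1) with (a+2) by ring.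
    pose proof (Fa_rec a y ltac:(lra)). field_simplify_eq; [|split; lra].
    apply (Rmult_eq_reg_l y); auto. nra. }
  assert (HFnz : forall x, 0 < x < j -> Fa a (x^2) <> 0).
  { intros x Hx. rewrite <- Jcal_eq by (unfold a; lra). apply Hnz; auto. }
  assert (HdJe : forall x, dJ x = - (x * Fa a (x^2)) / (2*a)).
  { intros x. apply (uniqueness_limite (Jcal nu) x); auto.
    assert (Jcal nu = fun x => Fa nu (x^2)).
    { apply functional_extensionality. intros; apply Jcal_eq; auto. }
    rewrite H. apply is_derive_Reals.
    replace (- (x * Fa a (x ^ 2)) / (2 * a)) with (2 * x * (- Fa (nu+1) (x^2) / (4 * (nu+1)))).
    2:{ unfold a. field. lra. }
    apply (is_derive_comp (Fa nu) (fun x => x^2)).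
    apply is_derive_Reals, Fa_derive; lra.
    auto_derive; auto. ring. }
  split.
  - intros x Hx. rewrite HdJe.
    assert (0 < Fa a (x^2)).
    { apply (Fpos a j (Fa a) (Fa (a+1))); auto. apply Fa_0. split; nra. }
    replace (- (- (x * Fa a (x ^ 2)) / (2 * a))) with (x * Fa a (x^2) / (2*a)) by (field; lra).
    apply Rdiv_lt_0_compat; nra.
  - intros x y t Hx Hy Hxy Ht.
    pose proof (hf_conc a j (Fa a) (Fa (a+1)) Ha Hj HFd HGe HGd (Fa_0 a) (Fa_0 (a+1)) HFnz x y t Hx Hy Hxy Ht) as H.
    unfold hf in H. rewrite !HdJe.
    replace (- (- (x * Fa a (x ^ 2)) / (2 * a))) with (x * Fa a (x^2) / (2*a)) by (field; lra).
    replace (- (- (y * Fa a (y ^ 2)) / (2 * a))) with (y * Fa a (y^2) / (2*a)) by (field; lra).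
    match goal with |- _ < ln (- (- (?z * _) / _)) => 
      replace (- (- (z * Fa a (z ^ 2)) / (2 * a))) with (z * Fa a (z^2) / (2*a)) by (field; lra) end.
    exact H.
Qed.
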